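(* Let $f\in\omega^{\subset\omega}$, let $\Xi$ be a family of completions of $f$ which blocks at width $n_\Xi$, and let $U$ be a $2n_\Xi$-branching set of extensions of $f$. Then there is a $2$-branching set of extensions of $f$, $U^*\subseteq U\cap\Xi$, such that for every $g\in U^*$, $\Xi\upharpoonright g$ blocks at width $n_\Xi$ (as a family of completions of $g$).
   Context: $\omega^{\subset\omega}$ is the set of partial functions from $\omega$ to $\omega$ with finite domain. For $f\in\omega^{\subset\omega}$, an $n$-branching set of extensions of $f$ of length $k$ is defined by induction on $k$: of length $1$, it is a set $U$ of $n$ functions such that for some fixed $x\notin\operatorname{dom}(f)$ each $g\in U$ satisfies $f\subseteq g$ and $\operatorname{dom}(g)=\operatorname{dom}(f)\cup\{x\}$; if $U_0$ is an $n$-branching set of extensions of $f$ of length $k$ and for each $g\in U_0$, $U_g$ is an $n$-branching set of extensions of $g$ of length $1$, then $\bigcup_{g\in U_0}U_g$ is an $n$-branching set of extensions of $f$ of length $k+1$. An $n$-branching set of extensions is one of some length $k\geq1$. A family of completions of $f$ is a set $\Xi\subseteq\omega^{\subset\omega}$ such that every $g\in\Xi$ satisfies $f\subseteq g$, and if $g\in\Xi$ and $f\subseteq h\subseteq g$ then $h\in\Xi$. $\Xi$ blocks at width $n$ if every $n$-branching set of extensions of $f$ has nonempty intersection with $\Xi$. For $g\in\Xi$, $\Xi\upharpoonright g=\{h\in\Xi: g\subseteq h\}$. *)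

(* Defs.v *)
From mathcomp Require Import all_boot.
From mathcomp Require Export finmap.
Set Implicit Arguments. Unset Strict Implicit. Unset Printing Implicit Defensive.
Local Open Scope fset_scope.
Local Open Scope fmap_scope.

(* omega^{subset omega}: partial functions nat -> nat with finite domain. *)
Definition pfun := {fmap nat -> nat}.

Definition pf_sub (f g : pfun) : Prop :=
  forall x y, f.[? x] = Some y -> g.[? x] = Some y.

Definition one_step (n : nat) (f : pfun) (x : nat) (U : {fset pfun}) : Prop :=
  [/\ x \notin domf f, #|` U| = n &
      forall g, g \in U -> pf_sub f g /\ domf g = x |` domf f].

Inductive branching (n : nat) (f : pfun) : nat -> {fset pfun} -> Prop :=
| branching1 (x : nat) (U : {fset pfun}) :
    one_step n f x U -> branching n f 1 U
| branchingS (k : nat) (U0 : {fset pfun}) (Ug : pfun -> {fset pfun}) (U : {fset pfun}) :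
    branching n f k U0 ->
    (forall g, g \in U0 -> exists x, one_step n g x (Ug g)) ->
    (forall h, h \in U <-> exists2 g, g \in U0 & h \in Ug g) ->
    branching n f k.+1 U.

Definition is_branching (n : nat) (f : pfun) (U : {fset pfun}) : Prop :=
  exists k, 1 <= k /\ branching n f k U.

Definition completions (f : pfun) (Xi : pfun -> Prop) : Prop :=
  (forall g, Xi g -> pf_sub f g) /\
  (forall g h, Xi g -> pf_sub f h -> pf_sub h g -> Xi h).

Definition blocks (f : pfun) (Xi : pfun -> Prop) (n : nat) : Prop :=
  forall U, is_branching n f U -> exists g, g \in U /\ Xi g.

Definition restr (Xi : pfun -> Prop) (g : pfun) : pfun -> Prop :=
  fun h => Xi h /\ pf_sub g h.

(* Main.v *)
Require Import Defs.
From mathcomp Require Import all_boot.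
From mathcomp Require Import finmap.
From Stdlib Require Import ClassicalEpsilon.
From mathcomp Require Import zify.
Local Open Scope fset_scope.
Local Open Scope fmap_scope.

Lemma pf_trans f g h : pf_sub f g -> pf_sub g h -> pf_sub f h.
Proof. by move=> A B x y /A /B. Qed.

Arguments pf_trans {f g h}.

Lemma pf_uniq (g g' h : pfun) : pf_sub g h -> pf_sub g' h -> domf g = domf g' -> g = g'.
Proof.
move=> A B D; apply/fmapP => k.
case E: (g.[? k]) => [y|].
- have kg' : k \in domf g' by rewrite -D -fndSome E.
  case E': (g'.[? k]) => [y'|]; last by move: kg'; rewrite -fndSome E'.
  by have := A _ _ E; rewrite (B _ _ E') => -[->].
- have kg : k \notin domf g by rewrite -fndSome E.
  by rewrite D in kg; rewrite not_fnd.
Qed.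

Arguments pf_uniq {g g' h}.

Lemma bound_seq (s : seq nat) : exists x, forall y, y \in s -> y < x.
Proof.
elim: s => [|a s [x Hx]]; first by exists 0.
exists (maxn a x).+1 => y; rewrite inE => /orP [/eqP ->|/Hx h].
  by rewrite ltnS leq_maxl.
by rewrite ltnS; apply: leq_trans (ltnW h) (leq_maxr a x).
Qed.

Lemma fresh (f : pfun) : exists x, x \notin domf f.
Proof.
have [x Hx] := bound_seq (enum_fset (domf f)).
by exists x; apply/negP => /Hx; rewrite ltnn.
Qed.

Fixpoint ext_set (g : pfun) (x : nat) (i : nat) : {fset pfun} :=
  if i is j.+1 then g.[x <- j] |` ext_set g x j else fset0.

Lemma ext_set_P g x i h : h \in ext_set g x i -> exists2 j, j < i & h = g.[x <- j].
Proof.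
elim: i => [|i IH] /=; first by rewrite in_fset0.
case/fset1UP => [->|/IH [j ji ->]]; first by exists i.
by exists j => //; apply: ltnW.
Qed.

Lemma card_ext_set g x i : #|` ext_set g x i| = i.
Proof.
elim: i => //= i IH; rewrite cardfsU1 IH.
suff -> : g.[x <- i] \notin ext_set g x i by [].
apply/negP => /ext_set_P [j ji E].
have := congr1 (fun h : pfun => h.[? x]) E; rewrite !fnd_set eqxx => -[eij].
by rewrite eij ltnn in ji.
Qed.

Lemma ex_one_step n g : exists x V, one_step n g x V.
Proof.
have [x Hx] := fresh g; exists x, (ext_set g x n); split => //.
  exact: card_ext_set.
move=> h /ext_set_P [j _ ->]; split; last exact: dom_setf.
move=> y v E; rewrite fnd_set; case: eqP => [eyx|//].
by move: E; rewrite eyx not_fnd.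
Qed.

Lemma branching_sub n g k W : branching n g k W -> forall w, w \in W -> pf_sub g w.
Proof.
elim => [x U [_ _ H] w /H [] //| k' U0 Ug U' _ IH HU HE w /HE [g' g'in inw]].
have [x [_ _ H]] := HU _ g'in.
exact: pf_trans (IH _ g'in) (proj1 (H _ inw)).
Qed.

Arguments branching_sub {n g k W}.

Lemma no_branch0 n g W : ~ branching n g 0 W.
Proof. by move=> H; inversion H. Qed.

Lemma branch1_inv n g W : branching n g 1 W -> exists y, one_step n g y W.
Proof.
move=> B; inversion B; subst; first by exists x.
by case: (@no_branch0 n g U0 H0).
Qed.

Lemma branchS_inv n g k W : branching n g k.+2 W ->
  exists U0 Ug, [/\ branching n g k.+1 U0,
    (forall h, h \in U0 -> exists y, one_step n h y (Ug h)) &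
    (forall h, h \in W <-> exists2 g', g' \in U0 & h \in Ug g')].
Proof.
move=> B; inversion B; subst.
by exists U0, Ug.
Qed.

Definition avoid (Xi : pfun -> Prop) (W : {fset pfun}) :=
  forall w h, w \in W -> pf_sub w h -> ~ Xi h.

Lemma fchoice (A B : Type) (b : B) (Q : A -> Prop) (P : A -> B -> Prop) :
  (forall a, Q a -> exists b, P a b) -> exists F, forall a, Q a -> P a (F a).
Proof.
move=> H.
have H' : forall a, exists b, Q a -> P a b.
  move=> a; case: (classic (Q a)) => [q|nq]; last by exists b.
  by have [b' ?] := H a q; exists b'.
exists (fun a => epsilon (inhabits b) (fun b => Q a -> P a b)) => a.
exact: epsilon_spec (H' a).
Qed.
Arguments fchoice {A B} b {Q P}.

Lemma ext_avoid n Xi g k W : branching n g k W -> avoid Xi W ->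
  exists W', branching n g k.+1 W' /\ avoid Xi W'.
Proof.
move=> B A.
have [E HE] := @fchoice pfun _ fset0 (fun _ => True)
   (fun w V => exists x, one_step n w x V)
   (fun w _ => let: ex_intro x (ex_intro V H) := ex_one_step n w in
               ex_intro _ V (ex_intro _ x H)).
exists (\bigcup_(w <- W) E w); split.
  apply: (branchingS (Ug := E) B) => [w _|h]; first exact: HE.
  split => [/bigfcupP [w /andP [wW _] hE] | [w wW hE]]; first by exists w.
  by apply/bigfcupP; exists w => //; rewrite wW.
move=> h h' /bigfcupP [w /andP [wW _] hE] hh'.
have [x [_ _ H]] := HE w I.
by apply: (A w h' wW); apply: pf_trans (proj1 (H _ hE)) hh'.
Qed.

Lemma lift_avoid n Xi g k W K : branching n g k W -> avoid Xi W -> k <= K ->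
  exists W', branching n g K W' /\ avoid Xi W'.
Proof.
move=> B A; elim: K => [|K IH].
  by rewrite leqn0 => /eqP k0; move: B; rewrite k0 => /no_branch0.
rewrite leq_eqVlt => /orP [/eqP <-| lt]; first by exists W.
have [W' [B' A']] := IH lt; exact: ext_avoid B' A'.
Qed.

Lemma common_len n Xi (s : seq pfun) :
  (forall g, g \in s -> exists k W, branching n g k W /\ avoid Xi W) ->
  exists K, forall K', K <= K' -> forall g, g \in s ->
    exists W, branching n g K' W /\ avoid Xi W.
Proof.
elim: s => [|a s IH] H; first by exists 0 => K' _ g; rewrite in_nil.
have [K1 HK1] : exists K, forall K', K <= K' -> forall g, g \in s ->
    exists W, branching n g K' W /\ avoid Xi W.
  by apply: IH => g gs; apply: H; rewrite inE gs orbT.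
have [k [W [B A]]] := H a (mem_head a s).
exists (maxn K1 k) => K' le g; rewrite inE => /orP [/eqP -> | gs].
  by apply: lift_avoid B A _; exact: leq_trans (leq_maxr _ _) le.
by apply: HK1 => //; exact: leq_trans (leq_maxl _ _) le.
Qed.

Lemma compose n (f : pfun) x V k : one_step n f x V ->
  forall W : pfun -> {fset pfun},
  (forall g, g \in V -> branching n g k.+1 (W g)) ->
  branching n f k.+2 (\bigcup_(g <- V) W g).
Proof.
move=> OS; elim: k => [|k IH] W HW.
  have H1 : forall g, g \in V -> exists y, one_step n g y (W g).
    by move=> g gV; apply: branch1_inv; apply: HW.
  apply: (branchingS (Ug := W) (branching1 OS) H1) => h.
  split => [/bigfcupP [w /andP [wW _] hE] | [w wW hE]]; first by exists w.
  by apply/bigfcupP; exists w => //; rewrite wW.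
have Hex : forall g, g \in V -> exists p : {fset pfun} * (pfun -> {fset pfun}),
   [/\ branching n g k.+1 p.1,
    (forall h, h \in p.1 -> exists y, one_step n h y (p.2 h)) &
    (forall h, h \in W g <-> exists2 g', g' \in p.1 & h \in p.2 g')].
  move=> g gV; have [U0 [Ug H]] := @branchS_inv _ _ _ _ (HW g gV).
  by exists (U0, Ug).
have [F HF] := fchoice (fset0, fun _ => fset0) Hex.
have B0 : branching n f k.+2 (\bigcup_(g <- V) (F g).1).
  by apply: IH => g gV; have [b _ _] := HF g gV.
pose sel h := epsilon (inhabits f) (fun g => g \in V /\ h \in (F g).1).
have selP : forall h g, g \in V -> h \in (F g).1 -> sel h \in V /\ h \in (F (sel h)).1.
  move=> h g gV hg; exact: (epsilon_spec (inhabits f) (fun g => g \in V /\ h \in (F g).1) (ex_intro _ g (conj gV hg))).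
have selU : forall h g, g \in V -> h \in (F g).1 -> sel h = g.
  move=> h g gV hg; have [sV hs] := selP h g gV hg.
  have [_ _ HV] := OS.
  have [b1 _ _] := HF _ sV; have [b2 _ _] := HF _ gV.
  have := pf_uniq (branching_sub b1 _ hs) (branching_sub b2 _ hg); apply.
  by rewrite (proj2 (HV _ sV)) (proj2 (HV _ gV)).
apply: (branchingS (Ug := fun h => (F (sel h)).2 h) B0).
  move=> h /bigfcupP [g /andP [gV _] hg].
  have [sV hs] := selP h g gV hg.
  by have [_ H2 _] := HF _ sV; apply: H2.
move=> h'; split.
  move=> /bigfcupP [g /andP [gV _] hW].
  have [_ _ H3] := HF _ gV; have [h hg hh'] := (proj1 (H3 h')) hW.
  exists h; first by apply/bigfcupP; exists g => //; rewrite gV.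
  by rewrite (selU h g gV hg).
move=> [h /bigfcupP [g /andP [gV _] hg] hh'].
have [sV hs] := selP h g gV hg.
apply/bigfcupP; exists (sel h); first by rewrite sV.
have [_ _ H3] := HF _ sV; apply/H3; by exists h.
Qed.

Lemma sub_card (A : {fset pfun}) m : m <= #|` A| -> exists B, B `<=` A /\ #|` B| = m.
Proof.
elim: m => [|m IH] le.
  by exists fset0; split; [apply/fsubsetP => z; rewrite in_fset0 | exact: cardfs0].
have [B [BA cB]] := IH (ltnW le).
have : #|` A `\` B| != 0 by rewrite cardfsDS // cB subn_eq0 -ltnNge le.
rewrite cardfs_eq0 => /fset0Pn [a /fsetDP [aA aB]].
exists (a |` B); split; last by rewrite cardfsU1 aB cB.
by apply/fsubsetP => z /fset1UP [->|/(fsubsetP BA)].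
Qed.

Arguments sub_card {A m}.
Arguments common_len {n Xi s}.
Arguments compose {n f x V k}.

Definition good (Xi : pfun -> Prop) n g := Xi g /\ blocks g (restr Xi g) n.

Definition pb (P : Prop) : bool := if excluded_middle_informative P then true else false.
Lemma pbP P : reflect P (pb P).
Proof. by rewrite /pb; case: excluded_middle_informative => ?; constructor. Qed.

Lemma comp_restr f Xi g : completions f Xi -> Xi g -> completions g (restr Xi g).
Proof.
move=> [C1 C2] Xg; split; first by move=> h [].
move=> h h' [Xh gh] gh' h'h; split => //.
by apply: (C2 _ _ Xh _ h'h); apply: pf_trans (C1 _ Xg) gh'.
Qed.

Lemma blocks_mono f (P Q : pfun -> Prop) n : blocks f P n -> (forall w, P w -> Q w) -> blocks f Q n.
Proof. by move=> HB PQ U /HB [g [gU Pg]]; exists g; split => //; apply: PQ. Qed.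

Lemma bad_avoid f Xi n g : completions f Xi -> pf_sub f g -> ~ good Xi n g ->
  exists k W, branching n g k W /\ avoid Xi W.
Proof.
move=> [C1 C2] fg ng; apply: NNPP => nex; apply: ng.
have XG : Xi g.
  apply: NNPP => nXg; apply: nex.
  have [y [W OS]] := ex_one_step n g; exists 1, W; split; first exact: branching1 OS.
  move=> w h wW wh Xh; apply: nXg.
  have [_ _ H] := OS; have gw := proj1 (H _ wW).
  exact: (C2 _ _ Xh fg (pf_trans gw wh)).
split => // U [k [k1 B]]; apply: NNPP => nU; apply: nex; exists k, U; split => //.
move=> w h wW wh Xh; apply: nU; exists w; split => //.
have gw := branching_sub B _ wW.
split => //; exact: (C2 _ _ Xh (pf_trans fg gw) wh).
Qed.

Lemma key f Xi n x V : completions f Xi -> blocks f Xi n -> one_step (n + n) f x V ->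
  exists y G, [/\ one_step 2 f y G, G `<=` V & forall g, g \in G -> good Xi n g].
Proof.
move=> C HB OS; have [xf cV HV] := OS.
have n0 : 0 < n.
  case: n HB {cV OS} => // HB.
  have [z [Z OZ]] := ex_one_step 0 f.
  have [g [gZ _]] := HB Z (ex_intro _ 1 (conj (leqnn 1) (branching1 OZ))).
  by have [_ cZ _] := OZ; move: gZ; rewrite (cardfs0_eq cZ) in_fset0.
pose G0 := [fset g in V | pb (good Xi n g)].
have G0V : G0 `<=` V by apply/fsubsetP => g; rewrite !inE => /andP [].
case: (leqP 2 #|` G0|) => [le2 | lt2].
  have [G [GG0 cG]] := sub_card le2.
  exists x, G; split.
  - split => // g gG; apply: HV; exact: (fsubsetP G0V) ((fsubsetP GG0) _ gG).
  - exact: fsubset_trans GG0 G0V.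
  - by move=> g /(fsubsetP GG0); rewrite !inE => /andP [_ /pbP].
exfalso.
have cB : n <= #|` V `\` G0|.
  rewrite cardfsDS // cV; move: lt2; move: (#|` G0|) => m lt; lia.
have [Bn [BnB cBn]] := sub_card cB.
have BV : Bn `<=` V by apply: fsubset_trans BnB _; exact: fsubset_trans (fsubsetDl _ _) (fsubset_refl _).
have bad : forall g, g \in enum_fset Bn -> exists k W, branching n g k W /\ avoid Xi W.
  move=> g gB; apply: (@bad_avoid f) => //.
    by have := HV g ((fsubsetP BV) _ gB); case.
  move=> gg; have := (fsubsetP BnB) _ gB; rewrite !inE => /andP [+ gV].
  by rewrite gV; move/pbP.
have [K HK] := common_len bad.
have [Wf HWf] := fchoice fset0 (HK K.+1 (leqW (leqnn K))).
have OSn : one_step n f x Bn.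
  by split => // g gB; apply: HV; apply: (fsubsetP BV).
have T := compose OSn Wf (fun g gB => proj1 (HWf g gB)).
have [t [tT Xt]] := HB _ (ex_intro _ K.+2 (conj isT T)).
move: tT => /bigfcupP [g /andP [gB _] tW].
by apply: (proj2 (HWf g gB)) tW _ Xt.
Qed.

Arguments blocks_mono {f P Q n}.
Arguments key {f Xi n x V}.
Arguments comp_restr {f Xi g}.

Lemma good_restr Xi n g h : good (restr Xi g) n h -> good Xi n h.
Proof.
move=> [[Xh _] Bh]; split => //; apply: (blocks_mono Bh); move=> w [[Xw _] hw]; by split.
Qed.

Arguments good_restr {Xi n g h}.

Lemma main_ind f Xi n k U : completions f Xi -> blocks f Xi n ->
  branching (n + n) f k U ->
  exists Us, branching 2 f k Us /\ forall g, g \in Us -> g \in U /\ good Xi n g.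
Proof.
move=> C HB; elim => [x V OS | k' U0 Ug U' B IH HU HE].
  have [y [G [OG GV HG]]] := key C HB OS.
  exists G; split; first exact: branching1 OG.
  by move=> g gG; split; [apply: (fsubsetP GV) | apply: HG].
have [Us0 [B0 H0]] := IH.
have Hex : forall g, g \in Us0 -> exists G, exists y, [/\ one_step 2 g y G,
    G `<=` Ug g & forall h, h \in G -> good Xi n h].
  move=> g gU; have [gU0 [Xg Bg]] := H0 g gU.
  have [x OSg] := HU g gU0.
  have [y [G [OG GV HG]]] := key (comp_restr C Xg) Bg OSg.
  exists G, y; split => // h hG; exact: good_restr (HG h hG).
have [F HF] := fchoice fset0 Hex.
exists (\bigcup_(g <- Us0) F g); split.
  apply: (branchingS (Ug := F) B0) => [g gU|h].
    by have [y [OG _ _]] := HF g gU; exists y.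
  split => [/bigfcupP [w /andP [wW _] hE] | [w wW hE]]; first by exists w.
  by apply/bigfcupP; exists w => //; rewrite wW.
move=> h /bigfcupP [g /andP [gU _] hF].
have [y [_ GU HG]] := HF g gU.
split; last exact: HG.
apply/HE; exists g; first exact: (H0 g gU).1.
exact: (fsubsetP GU).
Qed.

Arguments main_ind {f Xi n k U}.

Theorem mainTheorem9 (f : pfun) (Xi : pfun -> Prop) (n : nat) (U : {fset pfun}) :
  completions f Xi ->
  blocks f Xi n ->
  is_branching (2 * n) f U ->
  exists Ustar : {fset pfun},
    [/\ is_branching 2 f Ustar,
        (forall g, g \in Ustar -> g \in U /\ Xi g) &
        (forall g, g \in Ustar ->
           completions g (restr Xi g) /\ blocks g (restr Xi g) n)].
Proof.
move=> C HB [k [k1 B]]; rewrite mul2n -addnn in B.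
have [Us [BUs HUs]] := main_ind C HB B.
exists Us; split.
- by exists k.
- by move=> g /HUs [gU [Xg _]].
- move=> g /HUs [gU [Xg Bg]]; split => //; exact: comp_restr C Xg.
Qed.
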